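(* Let $G$ be a finite connected graph in which every induced cycle is a square (an induced $4$-cycle) and in which the two-squares graph does not embed. Then $G$ is $\mathcal{C}$-$\mathrm{HH}$.
   Context: Graphs are simple; subgraphs are induced; ''embeds'' means is isomorphic to an induced subgraph. A homomorphism maps edges to edges. A graph $G$ is $\mathcal{C}$-$\mathrm{HH}$ if every homomorphism from a finite connected induced subgraph of $G$ into $G$ extends to a homomorphism $G\to G$. The two-squares graph is the $6$-cycle $v_1\dots v_6v_1$ with the single chord $v_3v_6$. *)

(* Defs.v *)
From mathcomp Require Import all_boot.
Set Implicit Arguments. Unset Strict Implicit. Unset Printing Implicit Defensive.

(* A finite simple graph: vertex type T : finType, adjacency e : rel T,
   assumed symmetric and irreflexive (stated as hypotheses of the theorem). *)

Definition induced_connected (T : finType) (e : rel T) (S : {set T}) : Prop :=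
  S != set0 /\
  forall x y, x \in S -> y \in S ->
    connect [rel u v | [&& u \in S, v \in S & e u v]] x y.

Definition graph_connected (T : finType) (e : rel T) : Prop :=
  induced_connected e [set: T].

Definition hom_on (T : finType) (e : rel T) (S : {set T}) (f : T -> T) : Prop :=
  forall x y, x \in S -> y \in S -> e x y -> e (f x) (f y).

Definition hom (T : finType) (e : rel T) (g : T -> T) : Prop :=
  forall x y, e x y -> e (g x) (g y).

Definition C_HH (T : finType) (e : rel T) : Prop :=
  forall (S : {set T}) (f : T -> T),
    induced_connected e S -> hom_on e S f ->
    exists g : T -> T, hom e g /\ {in S, forall x, g x = f x}.

Definition cycle_adj (k : nat) (i j : 'I_k) : bool :=
  (val j == (val i).+1 %% k) || (val i == (val j).+1 %% k).

Definition induced_cycle (T : finType) (e : rel T) (k : nat) (c : 'I_k -> T) : Prop :=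
  3 <= k /\ injective c /\ forall i j, e (c i) (c j) = cycle_adj i j.

Definition all_induced_cycles_squares (T : finType) (e : rel T) : Prop :=
  forall (k : nat) (c : 'I_k -> T), induced_cycle e c -> k = 4.

(* Two-squares graph on 'I_6: vertex i stands for v_(i+1); the 6-cycle
   v1...v6v1 plus the chord v3v6, i.e. indices 2 and 5. *)
Definition two_squares_adj (i j : 'I_6) : bool :=
  cycle_adj i j || ((val i == 2) && (val j == 5)) || ((val i == 5) && (val j == 2)).

Definition embeds_two_squares (T : finType) (e : rel T) : Prop :=
  exists f : 'I_6 -> T, injective f /\ forall i j, e (f i) (f j) = two_squares_adj i j.

(* Main.v *)
Require Import Defs.
From Stdlib Require Import Classical.
From mathcomp Require Import all_boot zify.
Set Implicit Arguments. Unset Strict Implicit. Unset Printing Implicit Defensive.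
Lemma modS a N : a < N.+1 -> a.+1 %% N.+1 = if a == N then 0 else a.+1.
Proof.
move=> h; case: eqP => [->|ne]; first by rewrite modnn.
rewrite modn_small //; lia.
Qed.
Lemma arith1 i j N : i < N -> j < N ->
  ((j.+1 == i.+2 %% N.+1) || (i.+1 == j.+2 %% N.+1)) = (j == i.+1) || (i == j.+1).
Proof.
move=> hi hj; rewrite !modS; try lia.
case: ifP; case: ifP; move=> h1 h2; apply/idP/idP; lia.
Qed.
Lemma arith2 j N : 1 < N -> j < N ->
  ((j.+1 == 1 %% N.+1) || (0 == j.+2 %% N.+1)) = (j == 0) || (j == N.-1).
Proof.
move=> hN hj; rewrite (@modS 0) ?(@modS j.+1); try lia.
case: ifP; case: ifP; move=> h1 h2; apply/idP/idP; lia.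
Qed.
Lemma arith3 N : 1 < N -> ((0 == 1 %% N.+1) || (0 == 1 %% N.+1)) = false.
Proof. move=> hN; rewrite (@modS 0); try lia. case: ifP => h; lia. Qed.
Section W.
Variables (T : finType) (e : rel T).

Definition eS (S : {set T}) := [rel x y | [&& x \in S, y \in S & e x y]].
Definition walk S (v : T) t := forall k, k.+1 < size t -> eS S (nth v t k) (nth v t k.+1).

Lemma size_sc (t : seq T) i j : i <= j <= size t ->
  size (take i t ++ drop j t) = i + (size t - j).
Proof. move=> /andP[hij hj]; rewrite size_cat size_drop size_takel //; lia. Qed.

Lemma nth_sc (v : T) t i j k : i <= size t ->
  nth v (take i t ++ drop j t) k = if k < i then nth v t k else nth v t (k - i + j).
Proof.
move=> hi; rewrite nth_cat size_takel //.
case: ifP => hk; first by rewrite nth_take.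
by rewrite nth_drop addnC.
Qed.

Lemma walk_sc S v t i j : walk S v t -> i <= j <= size t ->
  (0 < i -> j < size t -> eS S (nth v t i.-1) (nth v t j)) ->
  walk S v (take i t ++ drop j t).
Proof.
move=> W /andP[hij hj] J k; rewrite size_sc ?hij // => hk.
have hi : i <= size t by lia.
rewrite !nth_sc //.
case: (ltnP k.+1 i) => h1.
  rewrite (ltn_trans (ltnSn k) h1); apply: W; lia.
case: (ltnP k i) => h2.
  have -> : k = i.-1 by lia.
  have -> : i.-1.+1 - i + j = j by lia.
  apply: J; lia.
have -> : k.+1 - i + j = (k - i + j).+1 by lia.
apply: W; lia.
Qed.

Lemma walk_mem S v t k : walk S v t -> 1 < size t -> k < size t -> nth v t k \in S.
Proof.
move=> W h1 hk.
case: (ltnP k.+1 (size t)) => h.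
  by have /and3P[] := W k h.
have := W k.-1; rewrite prednK; last by lia.
by move=> /(_ ltac:(lia)) /and3P[].
Qed.

Lemma sc_ok S v t i j : walk S v t -> i < j < size t ->
  (0 < i -> eS S (nth v t i.-1) (nth v t j)) -> (i = 0 -> nth v t j = nth v t 0) ->
  walk S v (take i t ++ drop j t) /\ size (take i t ++ drop j t) < size t /\
  nth v (take i t ++ drop j t) 0 = nth v t 0 /\
  nth v (take i t ++ drop j t) (size (take i t ++ drop j t)).-1 = nth v t (size t).-1.
Proof.
move=> W /andP[hij hj] J J0.
have hs : i <= j <= size t by apply/andP; split; lia.
have hi : i <= size t by lia.
split; first by apply: walk_sc => // hi0 _; apply: J.
rewrite size_sc //; split; first by lia.
rewrite !nth_sc //; split.
  case: ifP => // /negbT; rewrite -leqNgt leqn0 => /eqP i0.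
  by rewrite J0 // i0.
case: ifP => h; first by lia.
congr nth; lia.
Qed.
End W.
Section Main.
Variables (T : finType) (e : rel T).
Hypothesis esym : symmetric e.
Hypothesis eirr : irreflexive e.
Hypothesis Hcyc : all_induced_cycles_squares e.
Hypothesis Hdom : ~ embeds_two_squares e.

Lemma cyc_seq (x0 : T) (s : seq T) : uniq s -> 3 <= size s ->
  (forall i j, i < size s -> j < size s ->
     e (nth x0 s i) (nth x0 s j) = (j == i.+1 %% size s) || (i == j.+1 %% size s)) ->
  size s = 4.
Proof.
move=> us ss Hs.
apply: (Hcyc (c := fun i : 'I_(size s) => nth x0 s i)).
split; first by [].
split.
  by move=> i j /eqP; rewrite nth_uniq // => /eqP /val_inj.
by move=> i j; rewrite Hs.
Qed.

Lemma tri_free x y z : e x y -> e y z -> e x z -> False.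
Proof.
move=> hxy hyz hxz.
have nxy : x != y by apply/eqP=> E; move: hxy; rewrite E eirr.
have nyz : y != z by apply/eqP=> E; move: hyz; rewrite E eirr.
have nxz : x != z by apply/eqP=> E; move: hxz; rewrite E eirr.
have := @cyc_seq x [:: x; y; z].
rewrite /= !inE negb_or nxy nxz nyz => /(_ isT isT).
suff H : (forall i j : nat, i < 3 -> j < 3 ->
  e (nth x [:: x; y; z] i) (nth x [:: x; y; z] j) =
  (j == i.+1 %% 3) || (i == j.+1 %% 3)) by move/(_ H).
move=> [|[|[|i]]] [|[|[|j]]] //= _ _;
  by rewrite ?eirr ?hxy ?hyz ?hxz // ?(esym y x) ?(esym z x) ?(esym z y) ?hxy ?hyz ?hxz.
Qed.


Lemma triple v u1 w u3 a b : e v u1 -> e v w -> e v u3 -> e a u1 -> e a w ->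
  e b w -> e b u3 -> u1 != w -> u1 != u3 -> w != u3 -> e a u3 || e b u1.
Proof.
move=> hv1 hvw hv3 ha1 haw hbw hb3 n1w n13 nw3.
case: (boolP (e a u3)) => // na3; case: (boolP (e b u1)) => // nb1; exfalso.
have F_u1_a : e u1 a = true by rewrite ?(esym u1 a) //; rewrite esym.
have F_a_u1 : e a u1 = e u1 a by rewrite esym.
rewrite F_u1_a in F_a_u1.
have F_u1_w : e u1 w = false by apply/negbTE/negP => h; apply: (@tri_free v u1 w); solve [done | by rewrite esym].
have F_w_u1 : e w u1 = e u1 w by rewrite esym.
rewrite F_u1_w in F_w_u1.
have F_u1_b : e u1 b = false by by rewrite esym; apply/negbTE.
have F_b_u1 : e b u1 = e u1 b by rewrite esym.
rewrite F_u1_b in F_b_u1.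
have F_u1_u3 : e u1 u3 = false by apply/negbTE/negP => h; apply: (@tri_free v u1 u3); solve [done | by rewrite esym].
have F_u3_u1 : e u3 u1 = e u1 u3 by rewrite esym.
rewrite F_u1_u3 in F_u3_u1.
have F_u1_v : e u1 v = true by rewrite ?(esym u1 v) //; rewrite esym.
have F_v_u1 : e v u1 = e u1 v by rewrite esym.
rewrite F_u1_v in F_v_u1.
have F_a_w : e a w = true by rewrite ?(esym a w) //; rewrite esym.
have F_w_a : e w a = e a w by rewrite esym.
rewrite F_a_w in F_w_a.
have F_a_b : e a b = false by apply/negbTE/negP => h; apply: (@tri_free a w b); solve [done | by rewrite esym].
have F_b_a : e b a = e a b by rewrite esym.
rewrite F_a_b in F_b_a.
have F_a_u3 : e a u3 = false by apply/negbTE.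
have F_u3_a : e u3 a = e a u3 by rewrite esym.
rewrite F_a_u3 in F_u3_a.
have F_a_v : e a v = false by apply/negbTE/negP => h; apply: (@tri_free a u1 v); solve [done | by rewrite esym].
have F_v_a : e v a = e a v by rewrite esym.
rewrite F_a_v in F_v_a.
have F_w_b : e w b = true by rewrite ?(esym w b) //; rewrite esym.
have F_b_w : e b w = e w b by rewrite esym.
rewrite F_w_b in F_b_w.
have F_w_u3 : e w u3 = false by apply/negbTE/negP => h; apply: (@tri_free v w u3); solve [done | by rewrite esym].
have F_u3_w : e u3 w = e w u3 by rewrite esym.
rewrite F_w_u3 in F_u3_w.
have F_w_v : e w v = true by rewrite ?(esym w v) //; rewrite esym.
have F_v_w : e v w = e w v by rewrite esym.
rewrite F_w_v in F_v_w.
have F_b_u3 : e b u3 = true by rewrite ?(esym b u3) //; rewrite esym.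
have F_u3_b : e u3 b = e b u3 by rewrite esym.
rewrite F_b_u3 in F_u3_b.
have F_b_v : e b v = false by apply/negbTE/negP => h; apply: (@tri_free b u3 v); solve [done | by rewrite esym].
have F_v_b : e v b = e b v by rewrite esym.
rewrite F_b_v in F_v_b.
have F_u3_v : e u3 v = true by rewrite ?(esym u3 v) //; rewrite esym.
have F_v_u3 : e v u3 = e u3 v by rewrite esym.
rewrite F_u3_v in F_v_u3.
apply: Hdom.
pose s := [:: u1; a; w; b; u3; v].
have us : uniq s.
  rewrite /s /= !inE !negb_or n1w n13 /=.
  rewrite ?andbT.
  repeat (apply/andP; split); apply/eqP => E; subst;
    by move: F_u1_a F_a_u1 F_u1_w F_w_u1 F_u1_b F_b_u1 F_u1_u3 F_u3_u1 F_u1_v F_v_u1 F_a_w F_w_a F_a_b F_b_a F_a_u3 F_u3_a F_a_v F_v_a F_w_b F_b_w F_w_u3 F_u3_w F_w_v F_v_w F_b_u3 F_u3_b F_b_v F_v_b F_u3_v F_v_u3; rewrite ?eirr; congruence.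
exists (fun i : 'I_6 => nth v s i); split.
  by move=> i j /eqP; rewrite nth_uniq // => /eqP /val_inj.
move=> [[|[|[|[|[|[|i]]]]]] Hi] // [[|[|[|[|[|[|j]]]]]] Hj] //;
  by rewrite /two_squares_adj /cycle_adj /= ?F_u1_a ?F_a_u1 ?F_u1_w ?F_w_u1 ?F_u1_b ?F_b_u1 ?F_u1_u3 ?F_u3_u1 ?F_u1_v ?F_v_u1 ?F_a_w ?F_w_a ?F_a_b ?F_b_a ?F_a_u3 ?F_u3_a ?F_a_v ?F_v_a ?F_w_b ?F_b_w ?F_w_u3 ?F_u3_w ?F_w_v ?F_v_w ?F_b_u3 ?F_u3_b ?F_b_v ?F_v_b ?F_u3_v ?F_v_u3 ?eirr.
Qed.

Variables (SS : {set T}) (v : T).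
Hypothesis vS : v \notin SS.

Lemma pairwise n t : size t <= n -> walk e SS v t ->
  nth v t 0 != nth v t (size t).-1 -> e v (nth v t 0) -> e v (nth v t (size t).-1) ->
  exists2 a, a \in SS & e a (nth v t 0) && e a (nth v t (size t).-1).
Proof.
elim: n t => [|n IH] t hs W n12 hv1 hv2.
  by move: hs n12; rewrite leqn0 => /nilP -> /=; rewrite eqxx.
have st : 1 < size t.
  by move: n12; case: t {W hv1 hv2 hs} => [|x [|y t]] //=; rewrite eqxx.
case: (boolP (uniq t)) => [ut|/(uniqPn v) [i [j [hij hj E]]]]; last first.
  have J : 0 < i -> eS e SS (nth v t i.-1) (nth v t j).
    move=> hi; rewrite -E; have := W i.-1; rewrite prednK //; apply; set N := size t in hj *; lia.
  have J0 : i = 0 -> nth v t j = nth v t 0 by move=> i0; rewrite -E i0.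
  have [W' [s' [h0 hL]]] := @sc_ok _ e SS v t i j W (introT andP (conj hij hj)) J J0.
  have := IH _ _ W'; rewrite h0 hL; apply => //; lia.
case: (classic (exists i j, [/\ i.+1 < j, j < size t & e (nth v t i) (nth v t j)]))
  => [[i [j [hij hj E]]]|nB].
  have J : 0 < i.+1 -> eS e SS (nth v t i.+1.-1) (nth v t j).
    move=> _; rewrite /= E !(walk_mem W) //; set N := size t in hj *; lia.
  have hij' : i.+1 < j < size t by rewrite hij hj.
  have [W' [s' [h0 hL]]] := @sc_ok _ e SS v t i.+1 j W hij' J (fun i0 => ltac:(by [])).
  have := IH _ _ W'; rewrite h0 hL; apply => //; lia.
have nB' : forall i j, i.+1 < j -> j < size t -> e (nth v t i) (nth v t j) = false.
  move=> i j h1 h2; apply/negbTE/negP => h; apply: nB; exists i, j; split => //.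
have Wnth : forall k, k.+1 < size t -> e (nth v t k) (nth v t k.+1).
  by move=> k hk; have /and3P[] := W k hk.
have nuniq : forall i j, i < size t -> j < size t -> (nth v t i == nth v t j) = (i == j).
  by move=> i j hi hj; rewrite nth_uniq.
case: (classic (exists k, [/\ 0 < k, k.+1 < size t & e v (nth v t k)])) => [[k [k0 hk hvk]]|nC].
  have hk1 : k.+1 <= size t <= size t by rewrite leqnn andbT; exact: ltnW.
  have W1 : walk e SS v (take k.+1 t ++ drop (size t) t).
    by apply: walk_sc => // _; rewrite ltnn.
  have hk2 : 0 <= k <= size t by rewrite leq0n /=; apply: ltnW; apply: ltnW.
  have W2 : walk e SS v (take 0 t ++ drop k t) by apply: walk_sc.
  have hs1 : size (take k.+1 t ++ drop (size t) t) = k.+1 by rewrite size_sc // subnn addn0.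
  have hs2 : size (take 0 t ++ drop k t) = size t - k by rewrite size_sc.
  have hk3 : k.+1 <= size t by apply: ltnW.
  have e10 : nth v (take k.+1 t ++ drop (size t) t) 0 = nth v t 0 by rewrite nth_sc.
  have e1L : nth v (take k.+1 t ++ drop (size t) t) k = nth v t k by rewrite nth_sc // ltnSn.
  have e20 : nth v (take 0 t ++ drop k t) 0 = nth v t k by rewrite nth_sc.
  have e2L : nth v (take 0 t ++ drop k t) (size t - k).-1 = nth v t (size t).-1.
    rewrite nth_sc //=; congr nth; set N := size t in hk *; lia.
  have n1w : nth v t 0 != nth v t k by rewrite nuniq; set N := size t in hk st *; lia.
  have nw2 : nth v t k != nth v t (size t).-1.
    by rewrite nuniq; set N := size t in hk st *; lia.
  have [a aS /andP[ha1 haw]] : exists2 a, a \in SS & e a (nth v t 0) && e a (nth v t k).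
    have := IH _ _ W1; rewrite hs1 /= e10 e1L; apply => //; set N := size t in hk hs *; lia.
  have [b bS /andP[hbw hb2]] : exists2 b, b \in SS & e b (nth v t k) && e b (nth v t (size t).-1).
    have := IH _ _ W2; rewrite hs2 e20 e2L; apply => //; set N := size t in hk hs *; lia.
  case/orP: (triple hv1 hvk hv2 ha1 haw hbw hb2 n1w n12 nw2) => h.
    by exists a => //; rewrite ha1 h.
  by exists b => //; rewrite h hb2.
have nC' : forall k, 0 < k -> k.+1 < size t -> e v (nth v t k) = false.
  move=> k h1 h2; apply/negbTE/negP => h; apply: nC; exists k; split => //.
have vt : v \notin t.
  apply/negP => /(nthP v) [k hk E].
  by have := walk_mem W st hk; rewrite E (negbTE vS).
have Hs : size (v :: t) = 4.
  apply: (@cyc_seq v); first by rewrite /= vt ut.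
    by rewrite /=; apply: st.
  move=> [|i] [|j] /= hi hj.
  - by rewrite eirr arith3.
  - rewrite arith2 //.
    case: (eqVneq j 0) => [->|j0]; first by rewrite hv1.
    case: (eqVneq j (size t).-1) => [->|jL]; first by rewrite hv2 orbT.
    rewrite nC' //; first by rewrite lt0n.
    set N := size t in hj jL *; lia.
  - rewrite esym orbC arith2 //.
    case: (eqVneq i 0) => [->|i0]; first by rewrite hv1.
    case: (eqVneq i (size t).-1) => [->|iL]; first by rewrite hv2 orbT.
    rewrite nC' //; first by rewrite lt0n.
    set N := size t in hi iL *; lia.
  - rewrite arith1 //.
    case: (eqVneq j i.+1) => [Ej|j1]; first by rewrite Ej Wnth ?eqxx //; set N := size t in hj *; lia.
    case: (eqVneq i j.+1) => [Ei|i1]; first by rewrite Ei esym Wnth ?eqxx ?orbT //; set N := size t in hi *; lia.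
    case: (ltngtP i j) => h.
    + by rewrite nB' //; set N := size t in hj *; lia.
    + by rewrite esym nB' //; set N := size t in hi *; lia.
    + by rewrite h eirr.
have st3 : size t = 3 by move: Hs => /= [].
exists (nth v t 1).
  by apply: (walk_mem W); rewrite st3.
rewrite st3 /= esym.
have /and3P[_ _ ->] := W 0 ltac:(by rewrite st3).
by have /and3P[_ _ ->] := W 1 ltac:(by rewrite st3).
Qed.
End Main.

Section Main2.
Variables (T : finType) (e : rel T).
Hypothesis esym : symmetric e.
Hypothesis eirr : irreflexive e.
Hypothesis Hcyc : all_induced_cycles_squares e.
Hypothesis Hdom : ~ embeds_two_squares e.

Lemma pw2 (X : {set T}) v u1 u2 : v \notin X -> induced_connected e X ->
  u1 \in X -> u2 \in X -> u1 != u2 -> e v u1 -> e v u2 ->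
  exists2 a, a \in X & e a u1 && e a u2.
Proof.
move=> vX [_ Xc] h1 h2 n12 hv1 hv2.
have /connectP [p P L] := Xc _ _ h1 h2.
have W : walk e X v (u1 :: p).
  move=> k hk; have /(pathP v) := P; apply; by [].
have eL : nth v (u1 :: p) (size (u1 :: p)).-1 = u2 by rewrite nth_last /= -L.
have := @pairwise T e esym eirr Hcyc Hdom X v vX _ (u1 :: p) (leqnn _) W.
by rewrite eL /=; apply.
Qed.

Lemma helly (X : {set T}) v (l : seq T) : v \notin X -> induced_connected e X ->
  (forall u, u \in l -> (u \in X) && e v u) ->
  (forall x y, x \in l -> y \in l -> x = y) \/ exists2 a, a \in X & forall u, u \in l -> e a u.
Proof.
move=> vX Xc; elim: l => [|u l IH] Hl.
  by left.
have /andP [uX vu] := Hl u (mem_head _ _).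
have Hl' : forall z, z \in l -> (z \in X) && e v z.
  by move=> z zl; apply: Hl; rewrite inE zl orbT.
case: (IH Hl') => [Heq|[a aX Ha]].
  case: l Heq Hl Hl' {IH} => [|x l] Heq Hl Hl'.
    by left => x y; rewrite !inE => /eqP -> /eqP ->.
  have Hx := Heq x _ (mem_head _ _).
  case: (eqVneq u x) => [ux|ux].
    left => y z; rewrite in_cons => /orP[/eqP->|/Hx<-]; rewrite in_cons => /orP[/eqP->|/Hx<-] //.
  have /andP [xX vx] : (x \in X) && e v x by apply: Hl; rewrite !inE eqxx orbT.
  have [b bX /andP [bu bx]] := pw2 vX Xc uX xX ux vu vx.
  right; exists b => // z; rewrite in_cons => /orP[/eqP->|/Hx<-] //.
case: (boolP (e a u)) => au.
  by right; exists a => // z; rewrite in_cons => /orP[/eqP->|/Ha] //.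
case: l Ha Hl' {IH Hl} => [|x l] Ha Hl'.
  by left => y z; rewrite !inE => /eqP -> /eqP ->.
have ax := Ha x (mem_head _ _).
have /andP [xX vx] := Hl' x (mem_head _ _).
have ux : u != x by apply/eqP => E; move: au; rewrite E ax.
have [b bX /andP [bu bx]] := pw2 vX Xc uX xX ux vu vx.
right; exists b => // z; rewrite in_cons => /orP[/eqP->//|zl].
have az := Ha z zl.
have /andP [zX vz] := Hl' z zl.
have zu : z != u by apply/eqP => E; move: au; rewrite -E az.
case: (eqVneq z x) => [->//|zx].
have := @triple T e esym eirr Hcyc Hdom v z x u a b vz vx vu az ax bx bu zx zu.
rewrite (negbTE au) /= => -> //.
by rewrite eq_sym.
Qed.

End Main2.

Lemma cross (T : finType) (e : rel T) (X : {set T}) x y :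
  connect [rel u v | [&& u \in [set: T], v \in [set: T] & e u v]] x y ->
  x \in X -> y \notin X -> exists u v, [/\ u \in X, v \notin X & e u v].
Proof.
move=> /connectP [p P ->]; elim: p x P => [|z p IH] x /= P xX.
  by rewrite xX.
move: P => /andP [/and3P [_ _ xz] P] yX.
case: (boolP (z \in X)) => zX; first exact: IH P zX yX.
by exists x, z.
Qed.

Lemma nbr (T : finType) (e : rel T) x y : graph_connected e -> x != y -> exists z, e x z.
Proof.
move=> [_ Gc] xy; have /connectP [[|z p] P L] := Gc x y (in_setT _) (in_setT _).
  by move: xy; rewrite L eqxx.
by move: P => /= /andP [/and3P [_ _ xz] _]; exists z.
Qed.

Theorem lemma5p2 (T : finType) (e : rel T) :
  symmetric e -> irreflexive e ->
  graph_connected e ->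
  all_induced_cycles_squares e ->
  ~ embeds_two_squares e ->
  C_HH e.
Proof.
move=> esym eirr Gc Hcyc Hdom.
suff K : forall n (X : {set T}) f, #|~: X| <= n -> induced_connected e X -> hom_on e X f ->
    exists g : T -> T, hom e g /\ {in X, forall x, g x = f x}.
  by move=> X f; apply: K (leqnn _).
elim=> [|n IH] X f hn Xc hf.
  have XT : X = setT.
    apply/setP => y; rewrite inE; apply/negPn/negP => yX.
    by move: hn; rewrite leqn0 => /eqP/cards0_eq/setP/(_ y); rewrite !inE yX.
  by exists f; split => // x y; apply: hf; rewrite XT inE.
case: (eqVneq X setT) => [XT|XT].
  by exists f; split => // x y; apply: hf; rewrite XT inE.
have [y yX] : exists y, y \notin X.
  case: (pickP (fun z => z \notin X)) => [z zX|H]; first by exists z.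
  exfalso; move/eqP: XT; apply; apply/setP => z; rewrite inE.
  by move: (H z) => /= /negbFE.
have [x xX] : exists x, x \in X by case: Xc => /set0Pn [x xX] _; exists x.
have [u [v [uX vX uv]]] := cross (proj2 Gc x y (in_setT _) (in_setT _)) xX yX.
have vu : e v u by rewrite esym.
have [w Hw] : exists w, forall z, z \in X -> e v z -> e w (f z).
  have := @helly T e esym eirr Hcyc Hdom X v (enum [set z in X | e v z]) vX Xc.
  case.
  - by move=> z; rewrite mem_enum inE.
  - move=> Heq.
    have fu_ne : exists y', f u != y'.
      case: (eqVneq (f u) u) => [E|E]; last by exists u.
      by exists v; rewrite E; apply/eqP => E'; move: uX; rewrite E' (negbTE vX).
    have [y' hy'] := fu_ne.
    have [w hw] := nbr Gc hy'.
    exists w => z zX vz.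
    have -> : z = u by apply: Heq; rewrite mem_enum inE ?zX ?vz ?uX ?vu.
    by rewrite esym.
  - move=> [a aX Ha]; exists (f a) => z zX vz.
    by apply: hf => //; apply: Ha; rewrite mem_enum inE zX vz.
pose X' := v |: X.
pose f' := fun z => if z == v then w else f z.
have Xc' : induced_connected e X'.
  split; first by apply/set0Pn; exists v; rewrite !inE eqxx.
  pose r := [rel a b | [&& a \in X, b \in X & e a b]].
  pose r' := [rel a b | [&& a \in X', b \in X' & e a b]].
  have lift : forall a b, connect r a b -> connect r' a b.
    apply: connect_sub => a b /and3P [aX bX ab]; apply: connect1.
    by rewrite /= !inE aX bX ab !orbT.
  have uvc : connect r' u v by apply: connect1; rewrite /= !inE uX eqxx uv orbT.
  have vuc : connect r' v u by apply: connect1; rewrite /= !inE uX eqxx vu orbT.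
  have toU : forall z, z \in X' -> connect r' z u /\ connect r' u z.
    move=> z; rewrite !inE => /orP [/eqP ->|zX]; first by [].
    by split; apply: lift; apply: (proj2 Xc).
  move=> a b /toU [au _] /toU [_ ub]; exact: connect_trans au ub.
have hf' : hom_on e X' f'.
  move=> a b; rewrite !inE /f' => /orP [/eqP ->|aX] /orP [/eqP ->|bX] ab.
  - by move: ab; rewrite eirr.
  - rewrite eqxx; case: eqP => [E|_]; first by move: bX; rewrite E (negbTE vX).
    exact: Hw.
  - rewrite eqxx; case: eqP => [E|_]; first by move: aX; rewrite E (negbTE vX).
    by rewrite esym; apply: Hw; rewrite // esym.
  - case: eqP => [E|_]; first by move: aX; rewrite E (negbTE vX).
    case: eqP => [E|_]; first by move: bX; rewrite E (negbTE vX).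
    exact: hf.
have hn' : #|~: X'| <= n.
  have h1 := cardsC X'; have h2 := cardsC X; have h3 := cardsU1 v X.
  rewrite vX /= in h3; rewrite /X' in h1 *; lia.
have [g [hg Hg]] := IH X' f' hn' Xc' hf'.
exists g; split => // z zX.
rewrite Hg; last by rewrite !inE zX orbT.
rewrite /f'; case: eqP => // E; by move: zX; rewrite E (negbTE vX).
Qed.
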